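(* Let $R$ be an abelian ring (an associative ring with identity in which every idempotent is central). Then $R$ is weakly $r$-clean if and only if $R$ is a weakly exchange ring.
   Context: For a ring $R$ with identity, $Idem(R)$ denotes its idempotents and $Reg(R)=\{r\in R:\ r=ryr \text{ for some } y\in R\}$ its regular elements. An element $x\in R$ is weakly $r$-clean if $x=r+e$ or $x=r-e$ for some $r\in Reg(R)$, $e\in Idem(R)$; $R$ is weakly $r$-clean if all its elements are. A ring $R$ is a weakly exchange ring if for every $x\in R$ there is an idempotent $e\in xR$ such that $1-e\in(1-x)R$ or $1-e\in(1+x)R$. *)

(* Defs.v *)
From mathcomp Require Import all_boot all_algebra.
Set Implicit Arguments. Unset Strict Implicit. Unset Printing Implicit Defensive.
Import GRing.Theory.
Local Open Scope ring_scope.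

Definition idempotent (R : pzRingType) (e : R) : Prop := e * e = e.

Definition regular (R : pzRingType) (r : R) : Prop := exists y : R, r = r * y * r.

Definition abelian_ring (R : pzRingType) : Prop :=
  forall e : R, idempotent e -> forall a : R, e * a = a * e.

Definition weakly_r_clean_elt (R : pzRingType) (x : R) : Prop :=
  exists r e : R, regular r /\ idempotent e /\ (x = r + e \/ x = r - e).

Definition weakly_r_clean (R : pzRingType) : Prop :=
  forall x : R, weakly_r_clean_elt x.

Definition in_right_ideal (R : pzRingType) (a b : R) : Prop := exists y : R, b = a * y.

Definition weakly_exchange (R : pzRingType) : Prop :=
  forall x : R, exists e : R, idempotent e /\ in_right_ideal x e /\
    (in_right_ideal (1 - x) (1 - e) \/ in_right_ideal (1 + x) (1 - e)).

(* Main.v *)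
Require Import Defs.
From mathcomp Require Import all_boot all_algebra.
Import GRing.Theory.
Local Open Scope ring_scope.

Set Implicit Arguments.
Section S.
Variable R : pzRingType.

Lemma idemC (e : R) : Defs.idempotent e -> Defs.idempotent (1 - e).
Proof. rewrite /Defs.idempotent => he; by rewrite mulrBl mul1r mulrBr mulr1 he subrr subr0. Qed.

Lemma idem_orth (e : R) : Defs.idempotent e -> e * (1 - e) = 0 /\ (1 - e) * e = 0.
Proof. rewrite /Defs.idempotent => he; by rewrite mulrBr mulrBl mulr1 mul1r he subrr. Qed.

Lemma centC (e : R) : (forall a, e * a = a * e) -> forall a, (1 - e) * a = a * (1 - e).
Proof. move=> hc a; by rewrite mulrBl mulrBr mul1r mulr1 hc. Qed.

Lemma reg_sum (e r1 r2 y1 y2 : R) : Defs.idempotent e -> (forall a, e * a = a * e) ->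
  r1 * (1 - e) = 0 -> r2 * e = 0 -> r1 = r1 * y1 * r1 -> r2 = r2 * y2 * r2 ->
  regular (r1 + r2).
Proof.
move=> he hc h1 h2 k1 k2; exists (y1 * e + y2 * (1 - e)).
have hc' := @centC e hc.
have e1 : r1 * e = r1.
  by apply/eqP; rewrite eq_sym -subr_eq0 -[X in X - _]mulr1 -mulrBr h1.
have e2 : r2 * (1 - e) = r2 by rewrite mulrBr mulr1 h2 subr0.
have m1 : r1 * (y2 * (1 - e)) = 0 by rewrite -hc' mulrA h1 mul0r.
have m2 : r2 * (y1 * e) = 0 by rewrite -hc mulrA h2 mul0r.
have -> : (r1 + r2) * (y1 * e + y2 * (1 - e)) = r1 * (y1 * e) + r2 * (y2 * (1 - e)).
  by rewrite mulrDl (mulrDr r1) (mulrDr r2) m1 m2 addr0 add0r.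
have t1 : r1 * (y1 * e) * r1 = r1 by rewrite -!mulrA hc e1 mulrA -k1.
have t2 : r1 * (y1 * e) * r2 = 0 by rewrite -!mulrA hc h2 !mulr0.
have t3 : r2 * (y2 * (1 - e)) * r1 = 0 by rewrite -!mulrA hc' h1 !mulr0.
have t4 : r2 * (y2 * (1 - e)) * r2 = r2 by rewrite -!mulrA hc' e2 mulrA -k2.
by rewrite mulrDl (mulrDr (r1 * (y1 * e))) (mulrDr (r2 * (y2 * (1 - e)))) t1 t2 t3 t4 addr0 add0r.
Qed.


Lemma exch_to_clean (x : R) : abelian_ring R ->
  (exists e : R, Defs.idempotent e /\ in_right_ideal x e /\
    (in_right_ideal (1 - x) (1 - e) \/ in_right_ideal (1 + x) (1 - e))) ->
  weakly_r_clean_elt x.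
Proof.
move=> hab [e [he [[a ha] hor]]].
have hc : forall a, e * a = a * e := hab e he.
have hc' := @centC e hc.
have [o1 o2] := idem_orth he.
have he' := idemC he.
have k1 : x * e = x * e * a * (x * e).
  by rewrite -(mulrA x e a) hc (mulrA x a e) -ha he hc -mulrA he.
have h1 : x * e * (1 - e) = 0 by rewrite -mulrA o1 mulr0.
case: hor => [[b hb]|[b hb]].
- exists (x * e + - ((1 - x) * (1 - e))), (1 - e); split; last split => //.
    apply: (reg_sum a (- b) he hc h1) => //.
      by rewrite mulNr -mulrA o2 mulr0 oppr0.
    rewrite mulrNN mulrN; congr (- _).
    by rewrite -(mulrA _ (1 - e) b) hc' (mulrA _ b (1 - e)) -hb he' hc' -mulrA he'.
  left. rewrite (mulrBl (1 - e) 1 x) mul1r opprB.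
  by rewrite -addrA subrK -mulrDr addrC subrK mulr1.
- exists (x * e + ((1 + x) * (1 - e))), (1 - e); split; last split => //.
    apply: (reg_sum a b he hc h1) => //.
      by rewrite -mulrA o2 mulr0.
    by rewrite -(mulrA _ (1 - e) b) hc' (mulrA _ b (1 - e)) -hb he' hc' -mulrA he'.
  right. rewrite mulrDl mul1r.
  by rewrite (addrC (1 - e)) addrA addrK -mulrDr addrC subrK mulr1.
Qed.

Lemma idem_prod (p q : R) : Defs.idempotent p -> Defs.idempotent q ->
  (forall a, p * a = a * p) -> Defs.idempotent (p * q).
Proof.
rewrite /Defs.idempotent => hp hq hc.
by rewrite -mulrA (mulrA q p q) -hc -mulrA hq mulrA hp.
Qed.

Lemma orth_prod (p q p' q' : R) : p * p' = 0 -> q * p' = p' * q ->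
  (p * q) * (p' * q') = 0.
Proof. by move=> h1 h2; rewrite -mulrA (mulrA q p' q') h2 -mulrA mulrA h1 mul0r. Qed.


Lemma clean_to_exch (x : R) : abelian_ring R -> weakly_r_clean_elt x ->
  (exists e : R, Defs.idempotent e /\ in_right_ideal x e /\
    (in_right_ideal (1 - x) (1 - e) \/ in_right_ideal (1 + x) (1 - e))).
Proof.
move=> hab [r [e [[y hy] [he hx]]]].
set f := r * y.
have hf : Defs.idempotent f by rewrite /Defs.idempotent /f mulrA -hy.
have hcf : forall a, f * a = a * f := hab f hf.
have hce : forall a, e * a = a * e := hab e he.
have hcf' := @centC f hcf.
have hce' := @centC e hce.
have [o1 o2] := idem_orth he.
have [q1 q2] := idem_orth hf.
have hf' := idemC hf.
have he' := idemC he.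
have fr : f * r = r by rewrite /f -hy.
have rf : r * (1 - f) = 0 by rewrite mulrBr mulr1 -hcf fr subrr.
have P1 : r * (y * (1 - e)) = f * (1 - e) by rewrite mulrA.
have P2 : e * (y * (1 - e)) = 0 by rewrite hce -mulrA o2 mulr0.
have P3 : r * ((1 - f) * e) = 0 by rewrite mulrA rf mul0r.
have P4 : e * ((1 - f) * e) = (1 - f) * e by rewrite hce -mulrA he.
have P5 : r * (y * e) = f * e by rewrite mulrA.
have P6 : e * (y * e) = y * e by rewrite hce -mulrA he.
have P7 : r * ((1 - f) * (1 - e)) = 0 by rewrite mulrA rf mul0r.
have P8 : e * ((1 - f) * (1 - e)) = 0 by rewrite hce -mulrA o2 mulr0.
set g := f * (1 - e) + (1 - f) * e.
have ML : forall z, (1 - x) * z = z - x * z by move=> z; rewrite mulrBl mul1r.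
have MP : forall z, (1 + x) * z = z + x * z by move=> z; rewrite mulrDl mul1r.
have hg : Defs.idempotent g.
  rewrite /Defs.idempotent /g mulrDl (mulrDr (f * (1 - e))) (mulrDr ((1 - f) * e)).
  rewrite (idem_prod hf he' hcf) (idem_prod hf' he hcf').
  rewrite (orth_prod f (1 - e) (1 - f) e q1 (hce' _)) (orth_prod (1 - f) e f (1 - e) q2 (hce _)).
  by rewrite addr0 add0r.
have G1 : 1 - g = f * e + (1 - f) * (1 - e).
  by apply/eqP; rewrite subr_eq eq_sym /g addrACA -!mulrDr subrKC subrK !mulr1 subrKC.

exists g; split => //.
case: hx => hx.
- split.
    exists (y * (1 - e) + (1 - f) * e).
    by rewrite hx mulrDr !(mulrDl r e) P1 P2 P3 P4 addr0 add0r.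
  left; exists (- (y * e) + (1 - f) * (1 - e)).
  have Xz : (r + e) * (- (y * e) + (1 - f) * (1 - e)) = - (f * e + y * e).
    by rewrite (mulrDr (r + e)) mulrN !(mulrDl r e) P5 P6 P7 P8 !addr0.
  by rewrite G1 ML hx Xz opprK (addrC (- (y * e) + _)) addrA addrK.
- split.
    exists (y * (1 - e) - (1 - f) * e).
    by rewrite hx mulrDr mulrN !(mulrBl _ r e) P1 P2 P3 P4 subr0 sub0r opprK.
  right; exists (y * e + (1 - f) * (1 - e)).
  have Xz : (r - e) * (y * e + (1 - f) * (1 - e)) = f * e - y * e.
    by rewrite (mulrDr (r - e)) !(mulrBl _ r e) P5 P6 P7 P8 subr0 addr0.
  by rewrite G1 MP hx Xz (addrC (y * e + _)) addrA subrK.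
Qed.
End S.

Theorem theorem2p11 (R : pzRingType) :
  abelian_ring R -> (weakly_r_clean R <-> weakly_exchange R).
Proof.
move=> hab; split.
- by move=> h x; apply: clean_to_exch.
- by move=> h x; apply: exch_to_clean.
Qed.
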